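(* Let $s\ge1$, $0<r_1<r_2<\cdots<r_s<1$ and $\varepsilon>0$. Then there is $n_0$ such that for every $n\ge n_0$ for which all $r_in$ are integers, there exist self-orthogonal additive codes $C_s\subseteq C_{s-1}\subseteq\cdots\subseteq C_1\subseteq\mathbb{F}_4^n$ with $|C_i|=2^{n-r_in}$ such that, for each $i$, every vector of $C_i^\perp\setminus C_i$ has weight at least $\left(H_4^{-1}\!\left(\frac{1-r_i}{2}\right)-\varepsilon\right)n$. That is, there are nested stabilizer quantum codes $Q_1\subseteq Q_2\subseteq\cdots\subseteq Q_s$ with parameters $[[n,r_in,\delta_in]]$ that simultaneously (asymptotically) meet the quantum Gilbert–Varshamov bound $\delta_i\ge H_4^{-1}\!\left(\frac{1-r_i}{2}\right)$.
   Context: $\mathbb{F}_4=\{0,1,\omega,\omega^2\}$, $\omega^2=\omega+1$, $\bar x=x^2$; trace inner product $\langle u,v\rangle=\sum_i(u_i\bar v_i+\bar u_iv_i)\in\mathbb{F}_2$ on $\mathbb{F}_4^n$; additive codes are $\mathbb{F}_2$-subspaces; $C^\perp$ is the trace dual; self-orthogonal means $C\subseteq C^\perp$; weight = number of nonzero coordinates. An $[[n,k,d]]$ stabilizer code is given by a self-orthogonal additive $C$ with $|C|=2^{n-k}$ such that every vector of $C^\perp\setminus C$ has weight $\ge d$. $H_4(x)=-x\log_4\frac x3-(1-x)\log_4(1-x)$, and $H_4^{-1}$ is the inverse of its restriction to $(0,3/4]$. *)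

(* Defs.v *)
From HB Require Import structures.
From mathcomp Require Import all_boot all_order all_algebra.
From mathcomp Require Import all_classical all_reals all_analysis.
Set Implicit Arguments. Unset Strict Implicit. Unset Printing Implicit Defensive.
Import Order.TTheory GRing.Theory Num.Theory.
Local Open Scope ring_scope.

(* F_4 = {a + b w : a, b in F_2}, with w^2 = w + 1.  The pair (a, b) stands
   for a + b*w.  Addition is the componentwise (zmodType) addition. *)
Definition F4 : finType := ('F_2 * 'F_2)%type.

(* (a + b w)(c + d w) = ac + (ad + bc) w + bd w^2 = (ac + bd) + (ad + bc + bd) w *)
Definition f4mul (x y : F4) : F4 :=
  (x.1 * y.1 + x.2 * y.2, x.1 * y.2 + x.2 * y.1 + x.2 * y.2).

Definition f4conj (x : F4) : F4 := f4mul x x.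

(* trace inner product <u,v> = sum_i (u_i vbar_i + ubar_i v_i), an element of
   F4 which lies in the prime field F_2 = {0, 1} *)
Definition tip n (u v : 'rV[F4]_n) : F4 :=
  \sum_(i < n) (f4mul (u 0 i) (f4conj (v 0 i)) + f4mul (f4conj (u 0 i)) (v 0 i)).

(* additive code: an F_2-subspace of F_4^n *)
Definition additive_code n (C : {set 'rV[F4]_n}) : Prop :=
  0 \in C /\ forall u v, u \in C -> v \in C -> u + v \in C.

Definition tdual n (C : {set 'rV[F4]_n}) : {set 'rV[F4]_n} :=
  [set v | [forall u in C, tip u v == 0]].

Definition self_orthogonal n (C : {set 'rV[F4]_n}) : Prop := C \subset tdual C.

Definition wt n (v : 'rV[F4]_n) : nat := #|[set i : 'I_n | v 0 i != 0]|.

Definition log4 {R : realType} (x : R) : R := ln x / ln 4.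
Definition H4 {R : realType} (x : R) : R :=
  - x * log4 (x / 3) - (1 - x) * log4 (1 - x).

(* inverse of the restriction of H4 to (0, 3/4] (H4 is injective there);
   the default value 0 is irrelevant on the range H4((0,3/4]) = (0,1]. *)
Definition H4inv {R : realType} (y : R) : R :=
  xget 0 [set x : R | 0 < x <= 3 / 4 /\ H4 x = y].

(* Main.v *)
Require Import Defs.
From HB Require Import structures.
From mathcomp Require Import all_boot all_order all_algebra.
From mathcomp Require Import all_fingroup mxabelem.
From mathcomp Require Import lra ring zify.
Import Order.TTheory GRing.Theory Num.Theory.
Local Open Scope ring_scope.

Module Aux.
Set Implicit Arguments. Unset Strict Implicit.

Lemma F2cases (z : 'F_2) : z = 0 \/ z = 1.
Proof. case: z => [[|[|//]]] ? /=; [left|right]; exact/val_inj. Qed.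

Lemma F2add2 (z : 'F_2) : z + z = 0.
Proof. by case: (F2cases z) => ->; apply/eqP. Qed.

Lemma F2neq0 (z : 'F_2) : z != 0 -> z = 1.
Proof. by case: (F2cases z) => ->; rewrite ?eqxx. Qed.

Lemma tipE1 (x y : F4) :
  f4mul x (f4conj y) + f4mul (f4conj x) y = (x.1 * y.2 + x.2 * y.1, 0).
Proof.
case: x y => [a b] [c d].
by case: (F2cases a) => ->; case: (F2cases b) => ->; case: (F2cases c) => ->; case: (F2cases d) => ->; apply/eqP.
Qed.

Lemma F4add2 (x : F4) : x + x = 0.
Proof. case: x => [a b]; by case: (F2cases a) => ->; case: (F2cases b) => ->; apply/eqP. Qed.

Lemma rVadd2 n (v : 'rV[F4]_n) : v + v = 0.
Proof. by apply/matrixP => i j; rewrite !mxE F4add2. Qed.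

Definition tip2 n (u v : 'rV[F4]_n) : 'F_2 :=
  \sum_(i < n) ((u 0 i).1 * (v 0 i).2 + (u 0 i).2 * (v 0 i).1).

Lemma tipE n (u v : 'rV[F4]_n) : tip u v = (tip2 u v, 0).
Proof.
rewrite /tip /tip2.
rewrite (eq_bigr (fun i => ((u 0 i).1 * (v 0 i).2 + (u 0 i).2 * (v 0 i).1, 0))); last first.
  move=> i _; exact: tipE1.
apply: (big_rec2 (fun (x : F4) (y : 'F_2) => x = (y, 0))) => // i a b _ ->.
by apply/eqP; rewrite xpair_eqE /= addr0 !eqxx.
Qed.

Lemma tip_eq0 n (u v : 'rV[F4]_n) : (tip u v == 0) = (tip2 u v == 0).
Proof. by rewrite tipE xpair_eqE eqxx andbT. Qed.

Lemma tip2C n (u v : 'rV[F4]_n) : tip2 u v = tip2 v u.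
Proof. by apply: eq_bigr => i _; rewrite addrC mulrC [X in _ + X]mulrC. Qed.

Lemma tip2Dl n (u u' v : 'rV[F4]_n) : tip2 (u + u') v = tip2 u v + tip2 u' v.
Proof.
rewrite /tip2 -big_split /=; apply: eq_bigr => i _; rewrite !mxE /=.
by rewrite !mulrDl; ring.
Qed.

Lemma tip2Dr n (u v v' : 'rV[F4]_n) : tip2 u (v + v') = tip2 u v + tip2 u v'.
Proof. by rewrite tip2C tip2Dl !(tip2C u). Qed.

Lemma tip2_0l n (v : 'rV[F4]_n) : tip2 0 v = 0.
Proof. by rewrite /tip2 big1 // => i _; rewrite !mxE /= !mul0r addr0. Qed.

Lemma tip2_0r n (v : 'rV[F4]_n) : tip2 v 0 = 0.
Proof. by rewrite tip2C tip2_0l. Qed.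

Lemma tip2_ii n (v : 'rV[F4]_n) : tip2 v v = 0.
Proof. by rewrite /tip2 big1 // => i _; rewrite mulrC F2add2. Qed.

Lemma in_tdual n (C : {set 'rV[F4]_n}) v :
  (v \in tdual C) = [forall u in C, tip2 u v == 0].
Proof. by rewrite inE; apply: eq_forallb => u; rewrite tip_eq0. Qed.

Lemma in_tdualP n (C : {set 'rV[F4]_n}) v :
  reflect (forall u, u \in C -> tip2 u v = 0) (v \in tdual C).
Proof.
rewrite in_tdual; apply: (iffP forall_inP) => H u /H; [exact/eqP|by move=> ->].
Qed.


Section Dual.
Variable n : nat.
Local Notation V := 'rV[F4]_n.

Definition phi (u : V) : 'rV['F_2]_(n + n) :=
  row_mx (\row_i (u 0 i).1) (\row_i (u 0 i).2).
Definition psi (u : V) : 'rV['F_2]_(n + n) :=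
  row_mx (\row_i (u 0 i).2) (\row_i (u 0 i).1).
Definition phiinv (y : 'rV['F_2]_(n + n)) : V :=
  \row_i (lsubmx y 0 i, rsubmx y 0 i).

Lemma phiK : cancel phiinv phi.
Proof.
move=> y; rewrite /phi -[RHS]hsubmxK; congr row_mx; apply/rowP => i; by rewrite !mxE.
Qed.

Lemma phiinvK : cancel phi phiinv.
Proof.
move=> u; apply/rowP => i; rewrite /phiinv /phi mxE row_mxKl row_mxKr !mxE.
by case: (u 0 i).
Qed.

Lemma psi_inj : injective psi.
Proof.
move=> u u' /eq_row_mx [/rowP h2 /rowP h1]; apply/rowP => i.
move: (h1 i) (h2 i); rewrite !mxE; case: (u 0 i) => a b; case: (u' 0 i) => c d /= -> -> //.
Qed.

Lemma psiD u u' : psi (u + u') = psi u + psi u'.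
Proof.
rewrite /psi add_row_mx; congr row_mx; apply/rowP => i; by rewrite !mxE.
Qed.

Lemma psi0 : psi 0 = 0.
Proof.
rewrite /psi -row_mx0; congr row_mx; apply/rowP => i; by rewrite !mxE.
Qed.

Lemma tip2_mx u v : tip2 u v = \sum_k psi u 0 k * phi v 0 k.
Proof.
rewrite /tip2 big_split_ord /= addrC big_split /=; congr (_ + _); apply: eq_bigr => i _;
  by rewrite /psi /phi ?row_mxEl ?row_mxEr !mxE.
Qed.

Variable D : {set V}.
Hypothesis addD : additive_code D.

Let D0 : 0 \in D. Proof. by case: addD. Qed.

Definition Amx : 'M['F_2]_(#|D|, n + n) := \matrix_(j < #|D|) psi (enum_val j).

Lemma tdual_ker v : (v \in tdual D) = (phi v <= kermx Amx^T)%MS.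
Proof.
rewrite sub_kermx; apply/in_tdualP/eqP => [H | H u uD].
  apply/rowP => j; rewrite !mxE; rewrite -[RHS](H (enum_val j)) ?enum_valP // tip2_mx.
  by apply: eq_bigr => k _; rewrite !mxE mulrC.
move/rowP/(_ (enum_rank_in D0 u)): H.
rewrite !mxE tip2_mx => H; rewrite -[RHS]H; apply: eq_bigr => k _; by rewrite !mxE enum_rankK_in // mulrC.
Qed.

Lemma psi_rowg : psi @: D = rowg Amx.
Proof.
apply/setP => y; rewrite mem_rowg; apply/imsetP/idP => [[u uD ->] | ].
  have -> : psi u = row (enum_rank_in D0 u) Amx by rewrite rowK enum_rankK_in.
  exact: row_sub.
case/submxP => w ->; rewrite mulmx_sum_row.
suff : \sum_i w 0 i *: row i Amx \in psi @: D by case/imsetP => u uD ->; exists u.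
apply: (big_ind (fun x => x \in psi @: D)).
- by apply/imsetP; exists 0 => //; rewrite psi0.
- move=> x1 y1 /imsetP [a aD ->] /imsetP [b bD ->]; apply/imsetP; exists (a + b).
    by case: addD => _; apply.
  by rewrite psiD.
move=> i _; case: (F2cases (w 0 i)) => ->; first by rewrite scale0r; apply/imsetP; exists 0 => //; rewrite psi0.
by rewrite scale1r rowK; apply/imsetP; exists (enum_val i) => //; exact: enum_valP.
Qed.

Lemma phi_rowg : phi @: tdual D = rowg (kermx Amx^T).
Proof.
apply/setP => y; rewrite mem_rowg; apply/imsetP/idP => [[u uD ->] | yk].
  by rewrite -tdual_ker.
by exists (phiinv y); rewrite ?phiK // tdual_ker phiK.
Qed.

Lemma card_dual : (#|D| * #|tdual D| = 2 ^ (n + n))%N.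
Proof.
rewrite -(card_imset _ psi_inj) -(card_imset _ (can_inj phiinvK)) psi_rowg phi_rowg.
rewrite !card_rowg card_Fp // mxrank_ker mxrank_tr -expnD subnKC //.
exact: rank_leq_col.
Qed.

End Dual.


Section Core.
Variable n : nat.
Local Notation V := 'rV[F4]_n.

Definition ext (X : {set V}) (g : V) := X :|: [set g + x | x in X].

Lemma ext_sub (X : {set V}) g : X \subset ext X g.
Proof. exact: subsetUl. Qed.

Lemma addK2 (g x : V) : g + x + x = g.
Proof. by rewrite -addrA rVadd2 addr0. Qed.

Lemma ext_add (X : {set V}) g : additive_code X -> additive_code (ext X g).
Proof.
case=> X0 XD; split; first by rewrite inE X0.
move=> u v; rewrite !inE => /orP [uX | /imsetP [x xX ->]] /orP [vX | /imsetP [y yX ->]].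
- by rewrite XD.
- apply/orP; right; apply/imsetP; exists (u + y); first exact: XD.
  by rewrite addrCA.
- apply/orP; right; apply/imsetP; exists (x + v); first exact: XD.
  by rewrite addrA.
- rewrite (addrC g x) addrA addK2 XD //.
Qed.

Lemma ext_card (X : {set V}) g : additive_code X -> g \notin X -> #|ext X g| = (2 * #|X|)%N.
Proof.
case=> X0 XD gX; rewrite cardsU card_imset; last exact: addrI.
suff -> : X :&: [set g + x | x in X] = set0 by rewrite cards0 subn0 mul2n addnn.
apply/setP => z; rewrite !inE; apply/negP => /andP [zX /imsetP [x xX zE]].
by move: gX; rewrite -(addK2 g x) -zE XD.
Qed.

Lemma tdual_add (X : {set V}) : additive_code (tdual X).
Proof.
split; first by apply/in_tdualP => u _; rewrite tip2_0r.
move=> u v /in_tdualP Hu /in_tdualP Hv; apply/in_tdualP => w wX.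
by rewrite tip2Dr Hu // Hv // addr0.
Qed.

Lemma tdualS (X Y : {set V}) : X \subset Y -> tdual Y \subset tdual X.
Proof.
move=> XY; apply/subsetP => v /in_tdualP H; apply/in_tdualP => u uX.
by apply: H; apply: (subsetP XY).
Qed.

Lemma ext_so (X : {set V}) g : self_orthogonal X -> g \in tdual X -> self_orthogonal (ext X g).
Proof.
move=> so /in_tdualP gX; apply/subsetP => b bE; apply/in_tdualP => a aE.
have Hxy x y : x \in X -> y \in X -> tip2 x y = 0.
  by move=> xX yX; move: (subsetP so y yX) => /in_tdualP; apply.
move: aE bE; rewrite !inE => /orP [aX | /imsetP [x xX ->]] /orP [bX | /imsetP [y yX ->]].
- exact: Hxy.
- by rewrite tip2Dr gX // Hxy // addr0.
- by rewrite tip2Dl (tip2C g b) gX // Hxy // add0r.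
- by rewrite tip2Dl !tip2Dr tip2_ii (tip2C g y) !gX // Hxy // !addr0.
Qed.

Lemma existsD (X : {set V}) v : additive_code X -> v \notin X ->
  exists2 h, h \in tdual X & tip2 h v != 0.
Proof.
move=> aX vX.
have c1 := card_dual aX; have c2 := card_dual (ext_add v aX).
rewrite ext_card // in c2.
have X0 : (0 < #|X|)%N by apply/card_gt0P; exists 0; case: aX.
have lt : (#|tdual (ext X v)| < #|tdual X|)%N.
  have : (#|X| * #|tdual X| = #|X| * (2 * #|tdual (ext X v)|))%N by rewrite c1 -c2 mulnA (mulnC #|X|).
  move/eqP; rewrite eqn_pmul2l // => /eqP ->.
  have : (0 < 2 ^ (n + n))%N by rewrite expn_gt0.
  rewrite -c2; nia.
have : ~~ (tdual X \subset tdual (ext X v)).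
  by apply/negP => /subset_leq_card; rewrite leqNgt lt.
case/subsetPn => h hX hY; exists h => //.
move: hY; rewrite in_tdual => /forall_inPn [a aE].
move: aE; rewrite inE => /orP [aX0 | /imsetP [x xX ->]].
  by move: hX => /in_tdualP /(_ a aX0) ->.
move/in_tdualP: (hX) => H0; rewrite tip2Dl (H0 x xX) addr0 tip2C //.
Qed.

Lemma halfK (X : {set V}) v : additive_code X -> self_orthogonal X ->
  v \in tdual X -> v \notin X ->
  (2 * #|[set g in tdual X :\: X | tip2 g v == 0%R]| <= #|tdual X :\: X|)%N.
Proof.
move=> aX so vT vX; case: (existsD aX vX) => h hT hv.
set T := tdual X; set Z := [set g | tip2 g v == 0].
have P01 : (#|T :&: Z| <= #|T :\: Z|)%N.
  rewrite -(card_imset _ (addIr h)); apply: subset_leq_card; apply/subsetP => y.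
  case/imsetP => g; rewrite in_setI => /andP [gT gZ] ->.
  case: (tdual_add X) => _ Tadd; rewrite in_setD Tadd // andbT.
  by rewrite inE in gZ; rewrite inE tip2Dl (eqP gZ) add0r.
have XP0 : X \subset T :&: Z.
  apply/subsetP => x xX; rewrite in_setI; apply/andP; split; first exact: (subsetP so).
  by rewrite inE; move/in_tdualP: vT => ->.
have -> : [set g in T :\: X | tip2 g v == 0] = (T :&: Z) :\: X.
  apply/setP => g; rewrite !in_setD !in_setI [in LHS]inE in_setD [g \in Z]inE.
  by case: (g \in X); case: (g \in T); case: (tip2 g v == 0).
have hT0 := cardsID Z T.
rewrite !cardsD (setIidPr XP0) (setIidPr so).
have : (#|X| <= #|T :&: Z|)%N by apply: subset_leq_card.
move: P01 hT0; move: #|T :&: Z| #|T :\: Z| #|T| #|X| => a b c d; lia.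
Qed.

Definition U (B X : {set V}) := #|B :&: (tdual X :\: X)|.

Lemma card_sep (W : {set V}) (P : pred V) :
  #|[set v in W | P v]| = (\sum_(v in W) (P v : nat))%N.
Proof.
rewrite -sum1_card [LHS]big_mkcond [RHS]big_mkcond /=; apply: eq_bigr => x _.
by rewrite inE; case: (x \in W); case: (P x).
Qed.

Lemma avg_U (X B : {set V}) : additive_code X -> self_orthogonal X ->
  (\sum_(g in tdual X :\: X) 2 * U B (ext X g) <= #|tdual X :\: X| * U B X)%N.
Proof.
move=> aX so; set G := tdual X :\: X; set W := B :&: G.
have H1 g : (U B (ext X g) <= \sum_(v in W) (tip2 g v == 0%R : nat))%N.
  rewrite -card_sep /U; apply: subset_leq_card; apply/subsetP => v.
  rewrite in_setI in_setD => /and3P [vB vE vT].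
  have vT' := subsetP (tdualS (ext_sub X g)) _ vT.
  rewrite inE /W in_setI in_setD vB vT' andbT /=; apply/andP; split.
    by apply/negP => vX; move/negP: vE; apply; apply: (subsetP (ext_sub X g)).
  move/in_tdualP: vT => -> //; rewrite inE; apply/orP; right; apply/imsetP; exists 0; [by case: aX|by rewrite addr0].
apply: (@leq_trans (\sum_(g in G) 2 * \sum_(v in W) (tip2 g v == 0%R : nat))).
  by apply: leq_sum => g _; exact: leq_mul (leqnn 2) (H1 g).
rewrite -big_distrr /= exchange_big /= big_distrr /=.
rewrite /U -/G -/W mulnC -sum1_card big_distrl /=; apply: leq_sum => v vW.
rewrite mul1n -card_sep.
have : v \in G by move: vW; rewrite in_setI => /andP [].
rewrite in_setD => /andP [vX vT]; exact: halfK.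
Qed.

Lemma avg_exists (G : {set V}) (f : V -> nat) K :
  (0 < #|G|)%N -> (\sum_(g in G) f g <= #|G| * K)%N -> exists2 g, g \in G & (f g <= K)%N.
Proof.
move=> G0 H; case: (boolP [exists (g | g \in G), (f g <= K)%N]) => [/exists_inP [g gG fg] | /exists_inPn Hall].
  by exists g.
exfalso; have : (\sum_(g in G) K.+1 <= \sum_(g in G) f g)%N.
  by apply: leq_sum => g gG; move: (Hall g gG); rewrite -ltnNge.
rewrite sum_nat_const; move: H G0; move: (\sum_(g in G) f g) #|G| => a b; nia.
Qed.


Lemma step (X : {set V}) t s (B : 'I_s -> {set V}) (c : 'I_s -> nat) :
  additive_code X -> self_orthogonal X -> #|X| = (2 ^ t)%N -> (t < n)%N ->
  exists g, [/\ g \in tdual X, g \notin X &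
    (\sum_i U (B i) (ext X g) * 2 ^ (c i).+1 <= \sum_i U (B i) X * 2 ^ (c i))%N].
Proof.
move=> aX so cX tn; set G := tdual X :\: X.
have G0 : (0 < #|G|)%N.
  have cd := card_dual aX; rewrite cX in cd.
  have lt : (2 ^ t < #|tdual X|)%N.
    rewrite ltnNge; apply/negP => le.
    have : (2 ^ (n + n) <= 2 ^ (t + t))%N by rewrite -cd expnD leq_mul2l le orbT.
    by rewrite leqNgt ltn_exp2l // (_ : (t + t < n + n)%N = true) //; lia.
  rewrite cardsD (setIidPr so); move: lt; rewrite -cX; move: #|tdual X| #|X| => a b; lia.
have Hs : (\sum_(g in G) \sum_i U (B i) (ext X g) * 2 ^ (c i).+1 <= #|G| * \sum_i U (B i) X * 2 ^ (c i))%N.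
  rewrite exchange_big /= big_distrr /=; apply: leq_sum => i _.
  rewrite (eq_bigr (fun g => 2 ^ c i * (2 * U (B i) (ext X g))))%N; last first.
    by move=> g _; rewrite expnS; move: (U _ _) (2 ^ c i)%N => a b; nia.
  rewrite -big_distrr /=.
  apply: (@leq_trans (2 ^ c i * (#|G| * U (B i) X)))%N; first by rewrite leq_mul2l avg_U // orbT.
  by apply/eq_leq; move: (2 ^ c i)%N #|G| (U (B i) X) => a b d; nia.
have [g gG fg] := avg_exists G0 Hs.
exists g; move: gG; rewrite in_setD => /andP [gX gT]; by split.
Qed.


Lemma core s (m : 'I_s -> nat) (B : 'I_s -> {set V}) M :
  (forall i, m i <= M)%N -> (M <= n)%N -> (\sum_i #|B i| * 2 ^ (M - m i) < 2 ^ M)%N ->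
  exists D : nat -> {set V},
   [/\ forall t, (t <= M)%N -> [/\ additive_code (D t), self_orthogonal (D t) & #|D t| = (2 ^ t)%N],
       forall t u, (t <= u)%N -> (u <= M)%N -> D t \subset D u &
       forall i, U (B i) (D (m i)) = 0%N].
Proof.
move=> mM Mn Hsum.
pose Phi u X := (\sum_i U (B i) X * 2 ^ (u + (M - m i)))%N.
have claim : forall t, (t <= M)%N -> exists D : nat -> {set V},
   [/\ forall u, (u <= t)%N -> [/\ additive_code (D u), self_orthogonal (D u) & #|D u| = (2 ^ u)%N],
       forall u v, (u <= v)%N -> (v <= t)%N -> D u \subset D v &
       forall u, (u <= t)%N -> (Phi u (D u) < 2 ^ M)%N].
  elim=> [|t IH] Ht.
    exists (fun _ => [set (0 : V)]); split.
    - move=> u; rewrite leqn0 => /eqP ->; split.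
      + split; first by rewrite set11.
        by move=> a b; rewrite !inE => /eqP -> /eqP ->; rewrite addr0.
      + apply/subsetP => v; rewrite inE => /eqP ->; apply/in_tdualP => u' _; exact: tip2_0r.
      + by rewrite cards1 expn0.
    - by move=> *; exact: subxx.
    - move=> u; rewrite leqn0 => /eqP ->; apply: leq_ltn_trans Hsum.
      apply: leq_sum => i _; rewrite leq_mul2r; apply/orP; right.
      by apply: subset_leq_card; apply: subsetIl.
  have [D [Dp Dc Dphi]] := IH (ltnW Ht).
  have [aX soX cX] := Dp t (leqnn t).
  have [g [gT gX gle]] := @step (D t) t s B (fun i => t + (M - m i))%N aX soX cX (leq_trans Ht Mn).
  exists (fun u => if (u <= t)%N then D u else ext (D t) g); split.
  - move=> u ut; case: ifP => [/Dp // | /negbT]; rewrite -ltnNge => tu.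
    have -> : u = t.+1 by apply/eqP; rewrite eqn_leq ut tu.
    split; [exact: ext_add | exact: ext_so | ].
    by rewrite ext_card // cX expnS.
  - move=> u v uv vt; case: ifP => ut; case: ifP => vt'.
    + exact: Dc.
    + exact: subset_trans (Dc _ _ ut (leqnn t)) (ext_sub _ _).
    + by move: ut; rewrite (leq_trans uv) // vt'.
    + exact: subxx.
  - move=> u ut; case: ifP => [ut' | /negbT]; first exact: Dphi.
    rewrite -ltnNge => tu; have -> : u = t.+1 by apply/eqP; rewrite eqn_leq ut tu.
    apply: leq_ltn_trans (Dphi t (leqnn t)).
    apply: leq_trans gle; apply/eq_leq; apply: eq_bigr => i _; by rewrite addSn.
have [D [Dp Dc Dphi]] := claim M (leqnn M).
exists D; split => // i.
have := Dphi (m i) (mM i); rewrite /Phi (bigD1 i) //= subnKC // => H.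
have : (U (B i) (D (m i)) * 2 ^ M < 2 ^ M)%N by apply: leq_ltn_trans H; exact: leq_addr.
by move: (U _ _) (2 ^ M)%N => a b; nia.
Qed.

End Core.

End Aux.
Import Aux.

From mathcomp Require Import all_classical all_reals all_analysis.
Import Order.TTheory GRing.Theory Num.Theory.
Local Open Scope ring_scope.

Module Aux2.
Set Implicit Arguments. Unset Strict Implicit.

Lemma card_F4 : #|F4| = 4%N.
Proof. by rewrite /F4 card_prod card_Fp. Qed.

Lemma sum_F4 (R : pzSemiRingType) (x : R) :
  \sum_(a : F4) (if a != 0 then x else 1) = 1 + x *+ 3.
Proof.
rewrite (bigD1 (0 : F4)) //=; congr (_ + _).
rewrite (eq_bigr (fun _ => x)); last by move=> a /negbTE ->.
by rewrite sumr_const cardC1 card_F4.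
Qed.

Lemma sum_wt (R : comPzSemiRingType) n (x : R) :
  \sum_(v : 'rV[F4]_n) x ^+ wt v = (1 + x *+ 3) ^+ n.
Proof.
have E v : x ^+ wt v = \prod_i (if v 0 i != 0 then x else 1).
  by rewrite /wt -prodr_const big_mkcond /=; apply: eq_bigr => i _; rewrite inE.
under eq_bigr do rewrite E.
have -> : (1 + x *+ 3) ^+ n = \prod_(i < n) (1 + x *+ 3) by rewrite prodr_const card_ord.
under [in RHS]eq_bigr do rewrite -(sum_F4 x).
rewrite bigA_distr_bigA /=.
rewrite (reindex (fun f : {ffun 'I_n -> F4} => \row_i f i)) /=; last first.
  exists (fun v : 'rV[F4]_n => [ffun i => v 0 i]) => f _.
    by apply/ffunP => i; rewrite ffunE mxE.
  by apply/rowP => i; rewrite !mxE ffunE.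
by apply: eq_bigr => f _; apply: eq_bigr => i _; rewrite mxE.
Qed.


Lemma bad_bound (R : realType) n (x rho : R) : 0 < x -> x <= 1 ->
  (#|[set v : 'rV[F4]_n | (wt v)%:R < rho]|)%:R <= expR (- (rho * ln x)) * (1 + x *+ 3) ^+ n.
Proof.
move=> x0 x1; set S := [set v : 'rV[F4]_n | (wt v)%:R < rho].
rewrite -sum_wt mulr_sumr.
have -> : (#|S|)%:R = \sum_(v in S) (1 : R) by rewrite sumr_const.
rewrite [X in _ <= X](bigID (fun v => v \in S)) /=.
apply: ler_wpDr.
  by apply: sumr_ge0 => v _; apply: mulr_ge0; [exact: ltW (expR_gt0 _) | exact: exprn_ge0 (ltW x0)].
apply: ler_sum => v; rewrite inE => vS.
have -> : x ^+ wt v = expR ((wt v)%:R * ln x) by rewrite expRM_natl lnK // posrE.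
rewrite -expRD; apply: le_trans (expR_ge1Dx _); rewrite lerDl.
have := ln_le0 x1; nra.
Qed.

Lemma lnMp (R : realType) (a b : R) : 0 < a -> 0 < b -> ln (a * b) = ln a + ln b.
Proof. by move=> a0 b0; apply: lnM; rewrite posrE. Qed.

Lemma lnVp (R : realType) (a : R) : 0 < a -> ln (a^-1) = - ln a.
Proof. by move=> a0; apply: lnV; rewrite posrE. Qed.

Lemma num_bound (R : realType) (s n k : nat) (r d eps : R) :
  (0 < s)%N -> 0 < r -> r < 1 -> 0 < eps -> 0 < d -> d <= 3/4 -> H4 d = (1 - r) / 2 ->
  r * n%:R = k%:R ->
  ln (s%:R) / (eps * - ln (d / (3 * (1 - d)))) < n%:R ->
  s%:R * (expR (- ((d - eps) * n%:R * ln (d / (3 * (1 - d))))) * (1 + (d / (3 * (1 - d))) *+ 3) ^+ n)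
    < (2 ^ (n - k))%:R.
Proof.
move=> s0 r0 r1 e0 d0 d34 Hd rk Hn.
set x := d / (3 * (1 - d)).
have l2 : 0 < ln (2 : R) by apply: ln_gt0; lra.
have l4 : ln (4 : R) = ln 2 + ln 2 by rewrite -lnMp //; congr ln; lra.
have l3 : 0 < ln (3 : R) by apply: ln_gt0; lra.
have dne : d != 3/4.
  apply/negP => /eqP dE; move: Hd; rewrite dE /H4 /log4.
  have -> : (3 / 4 / 3 : R) = 4^-1 by field.
  have -> : (1 - 3 / 4 : R) = 4^-1 by field.
  rewrite lnVp; last lra.
  move=> H; have : (1 : R) = (1 - r) / 2.
    by rewrite -H l4; field; lra.
  lra.
have dlt : d < 3/4 by rewrite lt_neqAle dne d34.
have d1 : 0 < 1 - d by lra.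
have x0 : 0 < x by rewrite /x; apply: divr_gt0 => //; lra.
have x1 : x < 1 by rewrite /x ltr_pdivrMr; lra.
have lx : ln x < 0 by apply: ln_lt0; rewrite x0 x1.
have lxE : ln x = ln d - ln 3 - ln (1 - d).
  have p3 : (0 : R) < 3 * (1 - d) by apply: mulr_gt0 => //; lra.
  rewrite /x lnMp ?invr_gt0 // lnVp // lnMp //; last lra.
have x3 : 1 + x *+ 3 = (1 - d)^-1 by rewrite /x; field; lra.
have n0 := ler0n R n.
have kn : (k <= n)%N by rewrite -(ler_nat R) -rk; nra.
have ld3 : ln (d / 3) = ln d - ln 3.
  by rewrite lnMp ?invr_gt0 // ?lnVp //; lra.
have l4n : ln (4 : R) != 0 by rewrite l4; lra.
have Hkey : - d * (ln d - ln 3) - (1 - d) * ln (1 - d) = (1 - r) * ln 2.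
  have E : - d * (ln d - ln 3) - (1 - d) * ln (1 - d) =
     ln 4 * (- d * (ln (d / 3) / ln 4) - (1 - d) * (ln (1 - d) / ln 4)).
    by rewrite ld3; field.
  by rewrite E; move: Hd; rewrite /H4 /log4 => ->; rewrite l4; field.
have sp : (0 : R) < s%:R by rewrite ltr0n.
have Hn' : ln (s%:R : R) < n%:R * (eps * - ln x).
  by rewrite -ltr_pdivrMr //; apply: mulr_gt0 => //; lra.
rewrite -[s%:R]lnK ?posrE //.
have -> : (1 + x *+ 3) ^+ n = expR (n%:R * ln (1 + x *+ 3)).
  by rewrite expRM_natl lnK // posrE x3 invr_gt0.
rewrite natrX -[2 : R]lnK ?posrE // -expRM_natl -!expRD ltr_expR.
rewrite x3 lnVp // natrB // -rk.
have Hl : d * n%:R * ln x = d * n%:R * (ln d - ln 3 - ln (1 - d)) by rewrite lxE.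
have Hk2 : n%:R * (- d * (ln d - ln 3) - (1 - d) * ln (1 - d)) = n%:R * ((1 - r) * ln 2) by rewrite Hkey.
lra.
Qed.

Lemma d_lt (R : realType) (r d : R) :
  0 < r -> 0 < d -> d <= 3/4 -> H4 d = (1 - r) / 2 -> d < 3/4.
Proof.
move=> r0 d0 d34 Hd.
have l2 : 0 < ln (2 : R) by apply: ln_gt0; lra.
have l4 : ln (4 : R) = ln 2 + ln 2 by rewrite -lnMp //; congr ln; lra.
have dne : d != 3/4.
  apply/negP => /eqP dE; move: Hd; rewrite dE /H4 /log4.
  have -> : (3 / 4 / 3 : R) = 4^-1 by field.
  have -> : (1 - 3 / 4 : R) = 4^-1 by field.
  rewrite lnVp; last lra.
  move=> H; have : (1 : R) = (1 - r) / 2.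
    by rewrite -H l4; field; lra.
  lra.
by rewrite lt_neqAle dne d34.
Qed.

Lemma final_bound (R : realType) (s n k : nat) (r d eps : R) :
  (0 < s)%N -> 0 < r -> r < 1 -> 0 < eps -> 0 < d -> d <= 3/4 -> H4 d = (1 - r) / 2 ->
  r * n%:R = k%:R ->
  ln (s%:R) / (eps * - ln (d / (3 * (1 - d)))) < n%:R ->
  (s * #|[set v : 'rV[F4]_n | ((wt v)%:R < (d - eps) * n%:R)%R]| < 2 ^ (n - k))%N.
Proof.
move=> s0 r0 r1 e0 d0 d34 Hd rk Hn.
have dlt := d_lt r0 d0 d34 Hd.
have x0 : 0 < d / (3 * (1 - d)) by apply: divr_gt0 => //; lra.
have x1 : d / (3 * (1 - d)) <= 1 by rewrite ler_pdivrMr; lra.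
rewrite -(ltr_nat R) natrM.
apply: le_lt_trans (num_bound s0 r0 r1 e0 d0 d34 Hd rk Hn).
rewrite ler_pM2l ?ltr0n //.
have := bad_bound n ((d - eps) * n%:R) x0 x1.
by [].
Qed.

End Aux2.
Import Aux2.

Theorem lemma1 (R : realType) (s : nat) (r : 'I_s -> R) (eps : R) :
  (0 < s)%N ->
  (forall i, 0 < r i /\ r i < 1) ->
  (forall i j : 'I_s, (i < j)%N -> r i < r j) ->
  0 < eps ->
  exists n0 : nat, forall n : nat, (n0 <= n)%N ->
    forall k : 'I_s -> nat, (forall i, r i * n%:R = (k i)%:R) ->
    exists C : 'I_s -> {set 'rV[F4]_n},
      (forall i, additive_code (C i) /\ self_orthogonal (C i)) /\
      (forall i j : 'I_s, (i <= j)%N -> C j \subset C i) /\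
      (forall i, #|C i| = (2 ^ (n - k i))%N) /\
      (forall i v, v \in tdual (C i) :\: C i ->
         (H4inv ((1 - r i) / 2) - eps) * n%:R <= (wt v)%:R).
Proof.
move=> s0 rb rinc e0.
pose d i := H4inv ((1 - r i) / 2).
pose x i := d i / (3 * (1 - d i)).
pose N i := (Num.Def.trunc (ln (s%:R : R) / (eps * - ln (x i)))).+1.
exists (\max_i N i)%N => n nn0 k rk.
pose m i := (n - k i)%N.
pose M := (\max_i m i)%N.
pose B i := [set v : 'rV[F4]_n | (wt v)%:R < (d i - eps) * n%:R].
have n0 := ler0n R n.
have kn i : (k i <= n)%N.
  have [r0 r1] := rb i; by rewrite -(ler_nat R) -rk; nra.
have mM i : (m i <= M)%N by apply: (leq_bigmax i).
have Mn : (M <= n)%N by apply/bigmax_leqP => i _; exact: leq_subr.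
have Bi i : (s * #|B i| < 2 ^ m i)%N.
  have [r0 r1] := rb i.
  case: (pselect (exists y : R, 0 < y <= 3/4 /\ H4 y = (1 - r i) / 2)) => [ex | nex].
    have := xgetPex 0 ex; rewrite -/(d i) => /= [[/andP [dp d34] Hd]].
    apply: (final_bound (r := r i)) => //.
    apply: lt_le_trans (truncnS_gt _) _.
    rewrite ler_nat; apply: leq_trans nn0; exact: (leq_bigmax i).
  have dE : d i = 0 by apply: xgetPN => y Py; apply: nex; exists y.
  suff -> : #|B i| = 0%N by rewrite muln0 expn_gt0.
  apply: eq_card0 => v; rewrite !inE dE; apply/negbTE; rewrite -leNgt.
  by apply: le_trans (ler0n _ _); nra.
have Hsum : (\sum_i #|B i| * 2 ^ (M - m i) < 2 ^ M)%N.
  have each i : (s * (#|B i| * 2 ^ (M - m i)) < 2 ^ M)%N.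
    rewrite mulnA -{2}(subnKC (mM i)) expnD ltn_pmul2r ?expn_gt0 //; exact: Bi.
  have : (\sum_(i < s) (s * (#|B i| * 2 ^ (M - m i)) + 1) <= \sum_(i < s) 2 ^ M)%N.
    by apply: leq_sum => i _; rewrite addn1; exact: each.
  rewrite big_split /= -big_distrr /= !sum_nat_const card_ord.
  move: (\sum_i #|B i| * 2 ^ (M - m i))%N (2 ^ M)%N s0 => a b; nia.
have [D [Dp Dc DU]] := core mM Mn Hsum.
exists (fun i => D (m i)); split; [|split; [|split]].
- by move=> i; have [? ? ?] := Dp _ (mM i).
- move=> i j ij; apply: Dc (mM i).
  rewrite /m; apply: leq_sub2l; rewrite -(ler_nat R) -!rk; apply: ler_wpM2r => //.
  move: ij; rewrite leq_eqVlt => /orP [/eqP/val_inj -> // | /rinc /ltW //].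
- by move=> i; have [? ? ->] := Dp _ (mM i).
move=> i v vC; move: (DU i); rewrite /U => /eqP; rewrite cards_eq0 => /eqP H0.
have : v \notin B i.
  apply/negP => vB; have : v \in B i :&: (tdual (D (m i)) :\: D (m i)) by rewrite finset.in_setI vB.
  by rewrite H0 finset.in_set0.
by rewrite inE -leNgt.
Qed.
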